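(* Let $G$ be a graph with a tree decomposition $\mathcal{T}$ of width $w$, and let $\mathcal{F}=\{F_1,\dots,F_k\}$ be a set of forests, each a subgraph of $G$ consisting of vertex-disjoint rooted trees. Then there is a tree decomposition $\mathcal{T}'$ of $G$ of width $O(wk)$ such that for every tree $T$ of every forest in $\mathcal{F}$ and every vertex $v\in V(T)$, some bag of $\mathcal{T}'$ contains both $v$ and the root of $T$.
   Context: Standard tree decompositions: a tree whose nodes (bags) are vertex subsets such that every vertex lies in some bag, every edge has both endpoints in some bag, and the bags containing any fixed vertex form a connected subtree; width = maximum bag size minus one. *)

(* Defs.v *)
From mathcomp Require Import all_boot.
Set Implicit Arguments. Unset Strict Implicit. Unset Printing Implicit Defensive.

Definition simple_graph (V : finType) (E : rel V) : Prop :=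
  symmetric E /\ irreflexive E.

Definition acyclic (V : finType) (E : rel V) : Prop :=
  forall s : seq V, uniq s -> 2 < size s -> ~~ cycle E s.

Definition is_tree (I : finType) (tE : rel I) : Prop :=
  [/\ simple_graph tE, 0 < #|I|,
      (forall x y : I, connect tE x y) & acyclic tE].

Definition tree_decomposition (V : finType) (E : rel V)
    (I : finType) (tE : rel I) (B : I -> {set V}) : Prop :=
  [/\ is_tree tE,
      (forall v : V, exists i : I, v \in B i),
      (forall u v : V, E u v -> exists i : I, (u \in B i) && (v \in B i)) &
      (forall (v : V) (x y : I), v \in B x -> v \in B y ->
         connect [rel a b | [&& tE a b, v \in B a & v \in B b]] x y)].

Definition td_width (V I : finType) (B : I -> {set V}) : nat :=
  (\max_(i : I) #|B i|) - 1.

Definition rooted_forest (V : finType) (E : rel V)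
    (S : {set V}) (FE : rel V) (R : {set V}) : Prop :=
  [/\ simple_graph FE,
      (forall u v, FE u v -> [&& E u v, u \in S & v \in S]),
      acyclic FE,
      R \subset S &
      (forall v, v \in S -> exists! r, r \in R /\ connect FE v r)].

(* Main.v *)
Require Import Defs.
From mathcomp Require Import all_boot.
From mathcomp Require Import zify.

Lemma card_bigcup_ord (T : finType) k (F : 'I_k -> {set T}) m :
  (forall j, #|F j| <= m) -> #|\bigcup_(j < k) F j| <= k * m.
Proof.
elim: k F => [|k IH] F H; first by rewrite big_ord0 cards0.
rewrite big_ord_recr /=.
apply: leq_trans (leq_card_setU _ _).1 _.
rewrite mulSn addnC leq_add //.
exact: IH.
Qed.

Theorem lemma6p2 :
  exists c : nat,
  forall (V : finType) (E : rel V), simple_graph E ->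
  forall (I : finType) (tE : rel I) (B : I -> {set V}) (w : nat),
    tree_decomposition E tE B -> td_width B = w ->
  forall (k : nat) (S : 'I_k -> {set V}) (FE : 'I_k -> rel V)
         (R : 'I_k -> {set V}),
    (forall j, rooted_forest E (S j) (FE j) (R j)) ->
  exists (I' : finType) (tE' : rel I') (B' : I' -> {set V}),
    [/\ tree_decomposition E tE' B',
        td_width B' <= c * maxn w 1 * maxn k 1 &
        forall (j : 'I_k) (v r : V), v \in S j -> r \in R j ->
          connect (FE j) v r ->
          exists i : I', (v \in B' i) && (r \in B' i)].
Proof.
exists 4 => V E _ I tE B w [Htree Hcov Hedge Hcon] Hw k S FE R HF.
pose B' := fun i => B i :|: \bigcup_(j < k)
   [set r in R j | [exists v in B i, (v \in S j) && connect (FE j) v r]].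
have BB' : forall i x, x \in B i -> x \in B' i.
  by move=> i x Hx; rewrite /B' in_setU Hx.
have inB' : forall i j u x, u \in B i -> u \in S j -> x \in R j ->
    connect (FE j) u x -> x \in B' i.
  move=> i j u x Hu HS HR Hc; rewrite /B' in_setU; apply/orP; right.
  apply/bigcupP; exists j => //; rewrite inE HR /=.
  by apply/existsP; exists u; rewrite Hu HS Hc.
exists I, tE, B'; split.
- split => //.
  + by move=> v; have [i Hi] := Hcov v; exists i; rewrite BB'.
  + move=> u v /Hedge [i /andP [Hu Hv]]; exists i; by rewrite !BB'.
  move=> x a b.
  have [[symE _] _ _ _] := Htree.
  set P := [rel a b | [&& tE a b, x \in B' a & x \in B' b]].
  have symP : symmetric P.
    by move=> p q; rewrite /P /= symE; case: (x \in B' p); case: (x \in B' q); rewrite ?andbF.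
  have subP : forall p q, connect [rel a b | [&& tE a b, x \in B a & x \in B b]] p q ->
      connect P p q.
    apply: connect_sub => p q /= /and3P [h1 h2 h3]; apply: connect1.
    by rewrite /P /= h1 !BB'.
  have key : forall a, x \in B' a -> exists2 c, x \in B c & connect P a c.
    move=> a0; rewrite /B' in_setU => /orP [Ha|].
      by exists a0.
    move=> /bigcupP [j _]; rewrite inE => /andP [HR /existsP [u /and3P [Hu HS Hc]]].
    have [_ HFE _ _ _] := HF j.
    case/connectP: Hc => p Hp Hl.
    elim: p u a0 Hu HS Hp Hl => [|u' p IH] u a0 Hu HS Hp Hl.
      by rewrite /= in Hl; subst; exists a0.
    move: Hp => /= /andP [Huu' Hp].
    have /and3P [Eu _ Hu'S] := HFE _ _ Huu'.
    have [b0 /andP [Hub Hu'b]] := Hedge _ _ Eu.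
    have Cab : connect P a0 b0.
      apply: (connect_sub (e := [rel a b | [&& tE a b, u \in B a & u \in B b]])).
        move=> p0 q0 /= /and3P [h1 h2 h3]; apply: connect1.
        have Hcx : connect (FE j) u x.
          by apply/connectP; exists (u' :: p) => //=; rewrite Huu'.
        by rewrite /P /= h1 (inB' _ _ _ _ h2 HS HR Hcx) (inB' _ _ _ _ h3 HS HR Hcx).
      exact: Hcon.
    have [c Hc Cbc] := IH u' b0 Hu'b Hu'S Hp Hl.
    by exists c => //; apply: connect_trans Cab Cbc.
  move=> Ha Hb.
  have [c Hc Cac] := key a Ha.
  have [d Hd Cbd] := key b Hb.
  apply: connect_trans Cac _.
  apply: connect_trans (subP _ _ (Hcon _ _ _ Hc Hd)) _.
  by rewrite (sym_connect_sym symP).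
- have Hbi : forall i, #|B i| <= w.+1.
    move=> i; have := @leq_bigmax I (fun i => #|B i|) i.
    rewrite /td_width in Hw; lia.
  have HB'i : forall i, #|B' i| <= k.+1 * w.+1.
    move=> i; rewrite /B'.
    apply: leq_trans (leq_card_setU _ _).1 _.
    rewrite mulSn leq_add //.
    apply: card_bigcup_ord => j.
    apply: leq_trans (Hbi i).
    pose f := fun v => odflt v [pick r in R j | connect (FE j) v r].
    apply: leq_trans (leq_imset_card f (B i)).
    apply: subset_leq_card; apply/subsetP => r.
    rewrite inE => /andP [HR /existsP [v /and3P [Hv HS Hc]]].
    apply/imsetP; exists v => //.
    have [_ _ _ _ Huniq] := HF j.
    rewrite /f; case: pickP => [r' /andP [HR' Hc']|].
      have [r0 [_ Hu]] := Huniq v HS.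
      by rewrite /= -(Hu r' (conj HR' Hc')) (Hu r (conj HR Hc)).
    by move/(_ r); rewrite HR Hc.
  have Hmax : \max_(i : I) #|B' i| <= k.+1 * w.+1.
    by apply/bigmax_leqP => i _; exact: HB'i.
  rewrite /td_width.
  have h1 : k.+1 <= 2 * maxn k 1 by lia.
  have h2 : w.+1 <= 2 * maxn w 1 by lia.
  have := leq_mul h1 h2.
  move: Hmax; set M := \max_(i : I) _; move=> Hmax Hm.
  apply: leq_trans (leq_subr 1 M) _.
  apply: (leq_trans Hmax); apply: (leq_trans Hm).
  lia.
- move=> j v r Hv Hr Hc.
  have [i Hi] := Hcov v.
  by exists i; rewrite BB' //= (inB' _ _ _ _ Hi Hv Hr Hc).
Qed.
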